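(* For all integers $d \geq 1$, $r \geq 2$ and $k > 2r(d-1)$, there exists a constant $C$ such that for all $n > k$, $$f(n,k,d,r) \leq n\,\frac{k-2r(d-1)}{r\,(k-(r+1)(d-1))} + C.$$ In particular, $f(n,k,d,2) \leq \frac{k-4d+4}{2(k-3d+3)}\,n + C$.
   Context: All graphs are finite, simple and undirected. The order of a graph is its number of vertices. For a graph $G$ and positive integers $d, r$, let $f_G(d,r)$ be the largest integer $t$ such that in every coloring of the edges of $G$ with $r$ colors there is a monochromatic subgraph (all of its edges of one color) with minimum degree at least $d$ and order at least $t$. For integers $n > k > d$, let $f(n,k,d,r)$ be the minimum of $f_G(d,r)$ over all graphs $G$ with $n$ vertices and minimum degree at least $k$. *)

(* Defs.v *)
From mathcomp Require Import all_boot all_order all_algebra.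
Set Implicit Arguments. Unset Strict Implicit. Unset Printing Implicit Defensive.

Definition simple_graph n (E : {set 'I_n * 'I_n}) : bool :=
  [forall u : 'I_n, (u, u) \notin E] &&
  [forall u : 'I_n, forall v : 'I_n, ((u, v) \in E) == ((v, u) \in E)].

Definition min_deg_ge n (E : {set 'I_n * 'I_n}) (k : nat) : bool :=
  [forall v : 'I_n, k <= #|[set u : 'I_n | (v, u) \in E]|].

Definition edge_coloring n r (E : {set 'I_n * 'I_n})
    (c : {ffun 'I_n * 'I_n -> 'I_r}) : bool :=
  [forall u : 'I_n, forall v : 'I_n, ((u, v) \in E) ==> (c (u, v) == c (v, u))].

Definition mono_mindeg n r (E : {set 'I_n * 'I_n})
    (c : {ffun 'I_n * 'I_n -> 'I_r}) (d : nat) (S : {set 'I_n}) : bool :=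
  [exists i : 'I_r, [forall v in S,
     d <= #|[set u in S | ((v, u) \in E) && (c (v, u) == i)]| ]].

Definition fG n (E : {set 'I_n * 'I_n}) (d r : nat) : nat :=
  \max_(t < n.+1 | [forall c : {ffun 'I_n * 'I_n -> 'I_r},
        edge_coloring E c ==>
        [exists S : {set 'I_n}, (t <= #|S|) && mono_mindeg E c d S]]) t.

(* f(n,k,d,r): minimum of f_G(d,r) over graphs on n vertices with minimum
   degree >= k (K_n shows the range is nonempty when n > k). *)
Definition f (n k d r : nat) : nat :=
  \big[minn/n]_(E : {set 'I_n * 'I_n} | simple_graph E && min_deg_ge E k)
     fG E d r.

(* Main.v *)
Require Import Defs.
From mathcomp Require Import all_boot all_order all_algebra.
From mathcomp Require Import zify.
Import Order.TTheory GRing.Theory Num.Theory.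
Set Implicit Arguments. Unset Strict Implicit. Unset Printing Implicit Defensive.

Lemma div_between x y z : 0 < x -> x * y <= z < x * y + x -> z %/ x = y.
Proof.
move=> x0 /andP[h1 h2].
have -> : z = y * x + (z - x * y) by lia.
rewrite divnMDl // divn_small; first by rewrite addn0.
lia.
Qed.

Lemma div_lt_mul x y z : 0 < x -> z < y * x -> z %/ x < y.
Proof. by move=> x0 h; rewrite ltn_divLR. Qed.

Lemma card_lb n (y0 : 'I_n) (A : {set 'I_n}) k (h : nat -> nat) :
  (forall i, i < k -> h i < n) ->
  (forall i j, i < k -> j < k -> h i = h j -> i = j) ->
  (forall i, i < k -> insubd y0 (h i) \in A) -> k <= #|A|.
Proof.
move=> hn hinj hA.
pose F := fun i : 'I_k => insubd y0 (h i).
have Finj : injective F.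
  move=> i j e; have := congr1 val e; rewrite /F !val_insubd !hn // => e'.
  by apply/val_inj; exact: hinj (ltn_ord i) (ltn_ord j) e'.
rewrite -{1}(card_ord k) -(card_imset _ Finj).
apply: subset_leq_card; apply/subsetP=> y /imsetP[i _ ->].
exact: hA.
Qed.

Lemma card_ub n (y0 : 'I_n) (A : {set 'I_n}) m (h : nat -> nat) :
  (forall y, y \in A -> exists2 i, i < m & val y = h i) -> #|A| <= m.
Proof.
move=> hA.
pose F := fun i : 'I_m => insubd y0 (h i).
apply: (@leq_trans #|F @: 'I_m|); last by rewrite (leq_trans (leq_imset_card _ _)) ?card_ord.
apply: subset_leq_card; apply/subsetP=> y yA.
have [i im e] := hA y yA.
apply/imsetP; exists (Ordinal im) => //.
apply/val_inj; rewrite /F val_insubd /= -e.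
by rewrite ltn_ord.
Qed.


Section Constr.
Variables n r d k m M : nat.
Definition T := r * (d-1).
Definition L := (r-1) * (d-1).
Definition q := k - 2 * T.
Definition N := r * m.
Definition H := T + M.
Definition s a := if a < T then k * a else k * T + q * (a - T).
Definition len a := if a < T then k else q.
Definition owner p := if p < k * T then p %/ k else T + (p - k * T) %/ q.
Definition pp a b := s a + (b + N - s a %% N) %% N.
Definition blk b := b %/ m.
Definition g jj j := if jj %/ (d-1) < j then jj %/ (d-1) else (jj %/ (d-1)).+1.
Definition adj0 x y :=
  if y < N then blk x == blk y
  else if x < N then (if H <= y - N then x < m else pp (y - N) x < s (y-N) + len (y-N))
  else y - x <= T.
Definition col0 x y :=
  if y < N then blk x
  else if x < N then (if H <= y - N then 0 else g (pp (y-N) x %/ N) (blk x))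
  else (y - x - 1) %/ (d-1).
Definition adj x y := (x != y) && adj0 (minn x y) (maxn x y).
Definition col x y := col0 (minn x y) (maxn x y).
Definition top c x := ((x < N) && (blk x == c)) || ((c == 0) && (N + H <= x)).
Definition rank x := if x < N then 0 else x.
Definition idxc c j := if c < j then c else c.-1.
Definition fwdh c x i :=
  if x < N then N + owner (x + (idxc c (blk x) * (d-1) + i) * N)
  else x + c * (d-1) + 1 + i.

Hypothesis Hd : 0 < d.
Hypothesis Hr : 1 < r.
Hypothesis Hk : 2 * T < k.
Hypothesis Hm : k < m.
Hypothesis Hports : k * T + q * M <= L * N.
Hypothesis Hsize : N + H + T <= n.

Lemma qpos : 0 < q. Proof. rewrite /q; lia. Qed.
Lemma kpos : 0 < k. Proof. lia. Qed.
Lemma mN : m <= N. Proof. rewrite /N; nia. Qed.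
Lemma Npos : 0 < N. Proof. have := mN; lia. Qed.

Lemma adjC x y : adj x y = adj y x.
Proof. by rewrite /adj minnC maxnC eq_sym. Qed.
Lemma colC x y : col x y = col y x.
Proof. by rewrite /col minnC maxnC. Qed.

Lemma pp_mod a b : b < N -> pp a b %% N = b.
Proof.
move=> bN; rewrite /pp modnDmr.
have hs := ltn_pmod (s a) Npos.
have -> : s a + (b + N - s a %% N) = (s a %/ N + 1) * N + b.
  have := divn_eq (s a) N; lia.
by rewrite modnMDl modn_small.
Qed.

Lemma pp_range a b : s a <= pp a b < s a + N.
Proof.
rewrite /pp leq_addr /= ltn_add2l; exact: ltn_pmod Npos.
Qed.

Lemma pp_win a i : i < N -> pp a ((s a + i) %% N) = s a + i.
Proof.
move=> iN; rewrite /pp; congr (_ + _).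
set u := s a %/ N; set rho := s a %% N.
have e1 : s a = u * N + rho by rewrite /u /rho -divn_eq.
have rN : rho < N by rewrite /rho ltn_pmod // Npos.
rewrite e1 -addnA modnMDl.
set w := (rho + i) %/ N; set e := (rho + i) %% N.
have e2 : rho + i = w * N + e by rewrite /w /e -divn_eq.
have eN : e < N by rewrite /e ltn_pmod // Npos.
have w1 : w <= 1.
  have : w * N < 2 * N by lia.
  by rewrite ltn_pmul2r ?Npos //; lia.
case: w e2 w1 => [|[|w]] e2 w1 //.
- have -> : e + N - rho = 1 * N + i by lia.
  by rewrite modnMDl modn_small.
- have -> : e + N - rho = i by lia.
  by rewrite modn_small.
Qed.

Lemma owner_win a p : s a <= p < s a + len a -> owner p = a.
Proof.
have q0 := qpos.
rewrite /s /len /owner; case: ifP => aT /andP[h1 h2].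
  have -> : p < k * T.
    apply: (leq_trans h2); rewrite -mulnSr leq_mul2l; lia.
  apply: div_between; first lia. by rewrite h1 h2.
have -> : p < k * T = false by lia.
rewrite (@div_between q (a - T) (p - k * T)) //; first lia.
set x := q * (a - T) in h1 h2 *; apply/andP; split; lia.
Qed.

Lemma win_bound a : a < H -> s a + len a <= k * T + q * M.
Proof.
rewrite /H /s /len => aH; case: ifP => aT.
  have : k * a + k <= k * T by rewrite -mulnSr leq_mul2l; lia.
  lia.
have : q * (a - T) + q <= q * M by rewrite -mulnSr leq_mul2l; lia.
lia.
Qed.

Lemma pp_lt_LN a b : a < H -> pp a b < s a + len a -> pp a b %/ N < L.
Proof.
move=> aH h; rewrite ltn_divLR ?Npos // mulnC.
have := win_bound aH; lia.
Qed.

Lemma g_neq jj j : g jj j != j.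
Proof. rewrite /g; case: ifP => h; lia. Qed.

Lemma g_lt jj j : jj < L -> g jj j < r.
Proof.
move=> h; rewrite /g.
have : jj %/ (d-1) < r - 1.
  have d1 : 0 < d - 1.
    by move: h; rewrite /L; case: (d - 1) => [|//]; rewrite muln0.
  by rewrite ltn_divLR // mulnC.
set y := jj %/ (d-1); case: ifP => _; lia.
Qed.

Lemma blk_lt x : x < N -> blk x < r.
Proof. move=> h; rewrite /blk ltn_divLR; [exact: h | lia]. Qed.

Lemma adj_lt x y : x < y -> adj x y = adj0 x y.
Proof.
move=> xy; rewrite /adj (minn_idPl (ltnW xy)) (maxn_idPr (ltnW xy)).
by rewrite neq_ltn xy.
Qed.
Lemma col_lt_eq x y : x < y -> col x y = col0 x y.
Proof. by move=> xy; rewrite /col (minn_idPl (ltnW xy)) (maxn_idPr (ltnW xy)). Qed.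
Lemma adj_irr x : adj x x = false.
Proof. by rewrite /adj eqxx. Qed.

Lemma blk_small x : x < m -> blk x = 0.
Proof. by move=> h; rewrite /blk divn_small. Qed.

Lemma col_lt x y : adj x y -> col x y < r.
Proof.
wlog xy : x y / x < y.
  move=> hw hadj; case: (ltngtP x y) => [xy|yx|e].
  - exact: hw.
  - rewrite colC; apply: hw => //; by rewrite adjC.
  - by rewrite e adj_irr in hadj.
rewrite adj_lt // col_lt_eq // /adj0 /col0.
case: ifP => yN.
  move=> _; apply: blk_lt; lia.
case: ifP => xN.
  case: ifP => aH; first lia.
  move=> h; apply: g_lt; apply: pp_lt_LN h; lia.
move=> h.
have d1 : 0 < d - 1 by move: h; rewrite /T; case: (d - 1) => [|//]; rewrite muln0; lia.
rewrite ltn_divLR //.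
move: h; rewrite /T; lia.
Qed.

Lemma idxc_g jj j c : g jj j = c -> idxc c j = jj %/ (d-1).
Proof. rewrite /g /idxc; set y := jj %/ (d-1); case: ifP => h <-; case: ifP => h2 //; lia. Qed.

Lemma fwd c x u : ~~ top c x -> adj x u -> col x u = c ->
  top c u || (rank x <= rank u) -> exists2 i, i < d - 1 & u = fwdh c x i.
Proof.
rewrite /top /rank /fwdh.
case: (ltnP x N) => xN /=.
  have -> : (N + H <= x) = false by lia.
  rewrite andbF orbF => jc.
  case: (ltngtP x u) => [xu|ux|e]; last by rewrite e adj_irr.
  - rewrite adj_lt // col_lt_eq // /adj0 /col0.
    case: ifP => uN.
      by move=> _ cc; rewrite -cc eqxx in jc.
    rewrite xN; case: ifP => aH.
      by move=> xm cc; rewrite blk_small // -cc in jc.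
    move=> hw hg _.
    set a := u - N in aH hw hg.
    have aH' : a < H by lia.
    set jj := pp a x %/ N in hg.
    have jjL : jj < L := pp_lt_LN aH' hw.
    have d1 : 0 < d - 1 by move: jjL; rewrite /L; case: (d - 1) => [|//]; rewrite muln0.
    exists (jj %% (d-1)); first by rewrite ltn_mod.
    rewrite (idxc_g hg) -divn_eq.
    have -> : x + jj * N = pp a x.
      by rewrite /jj addnC [in RHS](divn_eq (pp a x) N) pp_mod.
    rewrite (owner_win (p := pp a x) (a := a)); first lia.
    by have := pp_range a x; lia.
  - rewrite adjC adj_lt // colC col_lt_eq // /adj0 /col0.
    by rewrite xN (ltn_trans ux xN) => /eqP e cc; rewrite -e cc eqxx in jc.
have xN' : (x < N) = false by lia.
move=> ntop.
case: (ltngtP x u) => [xu|ux|e]; last by rewrite e adj_irr.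
- rewrite adj_lt // col_lt_eq // /adj0 /col0.
  have -> : (u < N) = false by lia.
  have -> : (x < N) = false by lia.
  move=> h hc _.
  have d1 : 0 < d - 1 by move: h; rewrite /T; case: (d - 1) => [|//]; rewrite muln0; lia.
  exists ((u - x - 1) %% (d-1)); first by rewrite ltn_mod.
  have := divn_eq (u - x - 1) (d - 1); rewrite hc; lia.
- rewrite adjC adj_lt // colC col_lt_eq // /adj0 /col0.
  have -> : (x < N) = false by lia.
  case: ifP => uN.
    case: ifP => aH.
      move=> um c0; move: ntop; rewrite -c0 /=; lia.
    move=> _ hg; have := g_neq (pp (x - N) u %/ N) (blk u); rewrite hg => hne.
    rewrite eq_sym (negbTE hne) /= => hh; exfalso; have := Npos; move: hh ntop; case: (c == 0) => /=; lia.
  move=> _ _; move: ntop; case: (c == 0) => /= h1 h2; exfalso; lia.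
Qed.

Lemma adjV x y : x < N -> y < N -> adj x y = (x != y) && (blk x == blk y).
Proof.
move=> xN yN; rewrite /adj.
case: (leqP x y) => h.
  by rewrite /adj0 yN.
by rewrite /adj0 xN [blk y == _]eq_sym.
Qed.

Lemma deg x : x < n -> exists h : nat -> nat,
  [/\ forall i, i < k -> h i < n,
      forall i j, i < k -> j < k -> h i = h j -> i = j &
      forall i, i < k -> adj x (h i)].
Proof.
move=> xn.
have N0 := Npos; have q0 := qpos; have mN' := mN.
case: (ltnP x N) => xN.
  set j := blk x.
  have jr : j < r := blk_lt xN.
  have e := divn_eq x m; have xm := ltn_pmod x (ltn_trans kpos Hm).
  rewrite -/(blk x) -/j in e.
  have jm : j * m + m <= N by rewrite /N -mulSnr leq_mul2r jr orbT.
  exists (fun i => if j * m + i < x then j * m + i else j * m + i + 1).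
  split.
  - move=> i ik; set z := j * m in e jm *; case: ifP => _; lia.
  - move=> i i' ik i'k; set z := j * m in e jm *; case: ifP => c1; case: ifP => c2; lia.
  - move=> i ik.
    have hb : forall y, j * m <= y < j * m + m -> blk y = j.
      move=> y hy; apply: div_between; first lia. by rewrite mulnC.
    set z := j * m in e jm hb *.
    case: ifP => h1; rewrite adjV //; try lia.
    + rewrite (hb (z + i)); last lia. rewrite -/j eqxx andbT; apply/eqP; lia.
    + rewrite (hb (z + i + 1)); last lia. rewrite -/j eqxx andbT; apply/eqP; lia.
set a := x - N.
case: (ltnP a T) => aT.
  exists (fun i => (s a + i) %% N); split.
  - move=> i _; apply: (leq_trans (ltn_pmod _ N0)); lia.
  - move=> i i' ik i'k e.
    have := congr1 (pp a) e; rewrite !pp_win; lia.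
  - move=> i ik; rewrite adjC adj_lt; last by apply: (leq_trans (ltn_pmod _ N0)).
    rewrite /adj0.
    have -> : (x < N) = false by lia.
    rewrite ltn_pmod // -/a.
    have -> : (H <= a) = false by rewrite /H; lia.
    rewrite pp_win; last lia.
    by rewrite /len aT ltn_add2l.
case: (ltnP a H) => aH.
  exists (fun i => if i < T then x - 1 - i else if i < 2 * T then x + 1 + (i - T)
                   else (s a + (i - 2 * T)) %% N).
  have hw : forall i, (s a + i) %% N < N by move=> i; exact: ltn_pmod.
  split.
  - move=> i ik; case: ifP => c1; first lia.
    case: ifP => c2; first by move: aH Hsize; rewrite /H /a; lia.
    apply: leq_trans (hw _) _; lia.
  - move=> i i' ik i'k.
    have h1 := hw (i - 2 * T); have h2 := hw (i' - 2 * T).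
    case: (ltnP i T) => c1; case: (ltnP i' T) => c2;
    case: (ltnP i (2 * T)) => c3; case: (ltnP i' (2 * T)) => c4 /=; try lia.
    move=> e; have := congr1 (pp a) e; rewrite !pp_win; lia.
  - move=> i ik.
    case: ifP => h1.
      rewrite adjC adj_lt; last lia.
      rewrite /adj0.
      have -> : (x < N) = false by lia.
      have -> : (x - 1 - i < N) = false by lia.
      lia.
    case: ifP => h2.
      rewrite adj_lt; last lia.
      rewrite /adj0.
      have -> : (x + 1 + (i - T) < N) = false by lia.
      have -> : (x < N) = false by lia.
      lia.
    rewrite adjC adj_lt; last by apply: (leq_trans (hw _)).
    rewrite /adj0.
    have -> : (x < N) = false by lia.
    rewrite hw -/a.
    have -> : (H <= a) = false by lia.
    rewrite pp_win; last lia.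
    have aT' : (a < T) = false by lia.
    rewrite /len aT' ltn_add2l /q; lia.
exists id; split => //.
- move=> i ik; lia.
- move=> i ik; rewrite adjC adj_lt; last lia.
  rewrite /adj0.
  have -> : (x < N) = false by lia.
  have -> : (i < N) = true by lia.
  rewrite -/a aH; lia.
Qed.

Definition toph c i := if i < m then c * m + i else N + H + (i - m).

Lemma top_param c x : x < n -> top c x -> exists2 i, i < m + (n - N - H) & x = toph c i.
Proof.
move=> xn; rewrite /top /toph => /orP[/andP[xN /eqP bc]|/andP[/eqP c0 hx]].
  have e := divn_eq x m; have xm := ltn_pmod x (ltn_trans kpos Hm).
  rewrite -/(blk x) bc in e.
  exists (x %% m); first lia.
  by rewrite xm {1}e addnC.
exists (m + (x - N - H)); first lia.
have -> : (m + (x - N - H) < m) = false by lia.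
lia.
Qed.

Definition EE : {set 'I_n * 'I_n} := [set p : 'I_n * 'I_n | adj p.1 p.2].
Definition cf (i0 : 'I_r) : {ffun 'I_n * 'I_n -> 'I_r} :=
  [ffun p : 'I_n * 'I_n => insubd i0 (col p.1 p.2)].

Lemma n0 : 0 < n.
Proof. have := Npos; lia. Qed.

Lemma simpleE : simple_graph EE.
Proof.
apply/andP; split.
  by apply/forallP => u; rewrite inE /= adj_irr.
by apply/forallP => u; apply/forallP => v; rewrite !inE /= adjC.
Qed.

Lemma mindegE : min_deg_ge EE k.
Proof.
apply/forallP => v.
have [h [hn hinj hadj]] := deg (ltn_ord v).
apply: (card_lb (y0 := Ordinal n0) hn hinj) => i ik.
by rewrite !inE /= val_insubd hn // hadj.
Qed.

Lemma colorE i0 : edge_coloring EE (cf i0).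
Proof.
by apply/forallP => u; apply/forallP => v; apply/implyP => _; rewrite !ffunE /= colC.
Qed.

Lemma monoE i0 S : mono_mindeg EE (cf i0) d S -> #|S| <= m + (n - N - H).
Proof.
move=> /existsP[i /forallP hS].
have y0 : 'I_n := Ordinal n0.
have Stop : forall x, x \in S -> top i x.
  move=> x0 xS; apply/negPn/negP => ntop.
  pose P := fun y : 'I_n => (y \in S) && ~~ top i y.
  have Px0 : P x0 by rewrite /P xS ntop.
  case: (@arg_minnP _ x0 P (fun y => rank y) Px0) => y /andP[yS ynt] ymin.
  have := hS y; rewrite yS /= => hd.
  have : #|[set u in S | ((y, u) \in EE) && (cf i0 (y, u) == i)]| <= d - 1.
    apply: (@card_ub _ y0 _ _ (fwdh i y)) => u; rewrite !inE /= ffunE /= => /andP[uS /andP[hadj /eqP hc]].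
    have cl := col_lt hadj.
    have hc' : col y u = i by rewrite -hc val_insubd cl.
    apply: (fwd ynt hadj hc').
    case tu: (top i u) => //=.
    apply: ymin; by rewrite /P uS tu.
  move=> hle; have := leq_trans hd hle; lia.
apply: (@card_ub _ y0 _ _ (toph i)) => x xS.
exact: top_param (ltn_ord x) (Stop x xS).
Qed.

Lemma fGE : fG EE d r <= m + (n - N - H).
Proof.
have i0 : 'I_r := Ordinal (ltnW Hr).
rewrite /fG; apply/bigmax_leqP => t /forallP /(_ (cf i0)) /implyP /(_ (colorE i0)).
move=> /existsP[S /andP[tS hm]].
exact: leq_trans tS (monoE hm).
Qed.
End Constr.


Lemma bigmin_le_seq (I : eqType) (s : seq I) (P : pred I) (F : I -> nat) x0 i0 :
  i0 \in s -> P i0 -> \big[minn/x0]_(i <- s | P i) F i <= F i0.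
Proof.
elim: s => [//|a s IH]; rewrite inE big_cons => /orP[/eqP <-|hi] hp.
  by rewrite hp geq_minl.
case: (P a); last exact: IH.
exact: leq_trans (geq_minr _ _) (IH hi hp).
Qed.

Lemma f_le_fG n k d r (E : {set 'I_n * 'I_n}) :
  simple_graph E -> min_deg_ge E k -> f n k d r <= fG E d r.
Proof.
move=> h1 h2; rewrite /f.
by apply: bigmin_le_seq; [rewrite mem_index_enum | rewrite h1 h2].
Qed.

Lemma f_le_n n k d r : f n k d r <= n.
Proof.
rewrite /f; apply: (big_ind (fun x => x <= n)) => //.
  by move=> x y hx hy; rewrite geq_min hx.
move=> E _; rewrite /fG; apply/bigmax_leqP => t _; by rewrite -ltnS.
Qed.

Lemma arith_aux a1 a2 a3 a4 a5 a6 a7 b :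
  a1 - 2 * a3 < a7 + (a5 + a2) -> a5 - a6 < b + a4 ->
  a1 - a2 - a3 - a4 <= a7 + a3 + a6 + b.
Proof. lia. Qed.

Lemma main_nat d r k : 0 < d -> 1 < r -> 2 * T r d < k ->
  exists K n0, forall n, n0 <= n -> exists m,
    f n k d r <= m + K /\ m * (r * (L r d + q r d k)) <= q r d k * n.
Proof.
move=> Hd Hr Hk.
set T0 := T r d in Hk *; set L0 := L r d; set q0 := q r d k.
set D := L0 + q0.
have q0p : 0 < q0 by rewrite /q0 /q; lia.
have Dp : 0 < r * D by rewrite muln_gt0; lia.
exists (r * D + q0 * T0 + k * T0 + q0), (2 * T0 + (k * T0 + k + 1) * (r * D) + k + 1).
move=> n hn.
set m := q0 * (n - 2 * T0) %/ (r * D).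
set Nn := r * m.
set M := (L0 * Nn - k * T0) %/ q0.
have F1 : m * (r * D) <= q0 * (n - 2 * T0) by apply: leq_trunc_div.
have F1' : q0 * (n - 2 * T0) < m.+1 * (r * D) by apply: ltn_ceil.
have F2 : M * q0 <= L0 * Nn - k * T0 by apply: leq_trunc_div.
have F2' : L0 * Nn - k * T0 < M.+1 * q0 by apply: ltn_ceil.
have mge : k * T0 + k + 1 <= m.
  rewrite /m leq_divRL //.
  apply: (leq_trans _ (leq_pmull _ q0p)); lia.
have mN : m <= Nn by rewrite /Nn; nia.
have kTL : k * T0 <= L0 * Nn.
  case: (posnP (d - 1)) => d1.
    by rewrite /T0 /T d1 muln0 muln0.
  have : 1 <= L0 by rewrite /L0 /L muln_gt0 d1; lia.
  nia.
have Hports : k * T0 + q0 * M <= L0 * Nn by rewrite mulnC; lia.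
have eD : Nn * D = L0 * Nn + q0 * Nn by rewrite /D; lia.
have eF1 : m * (r * D) = Nn * D by rewrite /Nn /D; lia.
rewrite eF1 eD in F1 F1'.
have Hsz : Nn + M <= n - 2 * T0.
  rewrite -(leq_pmul2l q0p).
  have : q0 * M <= L0 * Nn by rewrite mulnC; lia.
  lia.
have Hsize : N r m + H r d M + T r d <= n by rewrite /N /H -/T0 -/Nn; lia.
have Hm : k < m by lia.
exists m; split.
  apply: leq_trans (f_le_fG d r (simpleE n r d k m M) (mindegE Hd Hr Hk Hm Hports Hsize)) _.
  apply: leq_trans (fGE Hd Hr Hk Hm Hports Hsize) _.
  rewrite leq_add2l /N /H -/T0 -/Nn.
  apply: (@leq_trans (q0 * (n - Nn - (T0 + M)))); first by rewrite leq_pmull.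
  have G1 : q0 * (n - 2 * T0) < r * D + (L0 * Nn + q0 * Nn).
    by rewrite -eD -eF1 -[r * D + _]/(m.+1 * (r * D)).
  have G2 : L0 * Nn - k * T0 < q0 + q0 * M.
    by rewrite [q0 * M]mulnC -[q0 + _]/(M.+1 * q0).
  have E1 : q0 * (n - Nn - (T0 + M)) = q0 * n - q0 * Nn - q0 * T0 - q0 * M.
    by rewrite !mulnBr mulnDr subnDA.
  have E2 : q0 * (n - 2 * T0) = q0 * n - 2 * (q0 * T0).
    by rewrite mulnBr mulnCA.
  rewrite E1; rewrite E2 in G1.
  exact: arith_aux G1 G2.
by rewrite eF1; rewrite eD; lia.
Qed.

Local Open Scope ring_scope.

Theorem theorem1p2 (d r k : nat) :
  (1 <= d)%N -> (2 <= r)%N -> (2 * r * (d - 1) < k)%N ->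
  exists C : rat, forall n : nat, (k < n)%N ->
    (f n k d r)%:R <=
      n%:R * ((k%:R - (2 * r * (d - 1))%N%:R) /
              (r%:R * (k%:R - ((r + 1) * (d - 1))%N%:R))) + C.
Proof.
move=> Hd Hr Hk.
have Hk' : (2 * T r d < k)%N by rewrite /T mulnA.
have [K [n0 hmain]] := main_nat Hd Hr Hk'.
exists (K + n0)%:R => n kn.
have eD : (L r d + q r d k = k - (r + 1) * (d - 1))%N.
  rewrite /L /q /T; nia.
have qp : (0 < q r d k)%N by rewrite /q; lia.
have Dp : (0 < r * (L r d + q r d k))%N by rewrite muln_gt0 addn_gt0 qp orbT; lia.
have -> : (k%:R - (2 * r * (d - 1))%N%:R) = (q r d k)%:R :> rat.
  by rewrite /q /T mulnA natrB //; lia.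
have -> : r%:R * (k%:R - ((r + 1) * (d - 1))%N%:R) = (r * (L r d + q r d k))%:R :> rat.
  have h : ((r + 1) * (d - 1) <= 2 * r * (d - 1))%N.
    by rewrite leq_mul2r; apply/orP; right; lia.
  rewrite eD [in RHS]natrM [in RHS]natrB //; lia.
set D := (r * (L r d + q r d k))%N.
have rat0 : 0 <= n%:R * ((q r d k)%:R / D%:R) :> rat.
  by rewrite mulr_ge0 // divr_ge0.
case: (leqP n0 n) => hn.
  have [m [h1 h2]] := hmain n hn.
  apply: (@le_trans _ _ (m + K)%:R); first by rewrite ler_nat.
  rewrite natrD; apply: lerD; last by rewrite ler_nat leq_addr.
  rewrite mulrA ler_pdivlMr ?ltr0n //.
  by rewrite -!natrM ler_nat [(n * _)%N]mulnC.
apply: (@le_trans _ _ (K + n0)%:R).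
  rewrite ler_nat; apply: (leq_trans (f_le_n n k d r)); lia.
by rewrite lerDr.
Qed.
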